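(* Let $\alpha,\beta\in\mathbb{R}$ with $\alpha\neq 0$, and let $G_1$ be the connected, simply connected Lie group whose Lie algebra $\mathfrak{g}_1$ has a basis $\{e_1,e_2,e_3\}$ with $[e_1,e_2]=\alpha e_1-\beta e_3$, $[e_1,e_3]=-\alpha e_1-\beta e_2$, $[e_2,e_3]=\beta e_1+\alpha e_2+\alpha e_3$, equipped with the left-invariant Lorentzian metric $g$ for which $\{e_1,e_2,e_3\}$ is pseudo-orthonormal with $e_3$ timelike. Let $\lambda_0, c\in\mathbb{R}$. Then there exists a derivation $D$ of $\mathfrak{g}_1$ with $\mathrm{Ric}=(s\lambda_0+c)\mathrm{Id}+D$ (i.e. $(G_1,g)$ is an algebraic Schouten soliton associated to the Levi-Civita connection) if and only if $\beta=0$ and $c=0$.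
   Context: Pseudo-orthonormal means $g(e_1,e_1)=g(e_2,e_2)=1$, $g(e_3,e_3)=-1$, $g(e_i,e_j)=0$ for $i\neq j$; left-invariant tensors are identified with their values on $\mathfrak{g}$. $\nabla$ is the Levi-Civita connection of $g$, with curvature $R(X,Y)Z=\nabla_X\nabla_YZ-\nabla_Y\nabla_XZ-\nabla_{[X,Y]}Z$. The Ricci tensor is $\rho(X,Y)=-g(R(X,e_1)Y,e_1)-g(R(X,e_2)Y,e_2)+g(R(X,e_3)Y,e_3)$, the Ricci operator $\mathrm{Ric}$ is defined by $\rho(X,Y)=g(\mathrm{Ric}(X),Y)$, and the scalar curvature is $s=\rho(e_1,e_1)+\rho(e_2,e_2)-\rho(e_3,e_3)$. A derivation of $\mathfrak{g}$ is a linear map $D:\mathfrak{g}\to\mathfrak{g}$ with $D[X,Y]=[DX,Y]+[X,DY]$ for all $X,Y\in\mathfrak{g}$. $(G,g)$ is called an algebraic Schouten soliton associated to $\nabla$ (with real constants $\lambda_0$, $c$) if $\mathrm{Ric}=(s\lambda_0+c)\mathrm{Id}+D$ for some derivation $D$. *)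

(* Defs.v *)
(* The Lie algebra g_1 = R^3 with basis e_0,e_1,e_2
   (= e_1,e_2,e_3 of the paper), vectors are row vectors 'rV[R]_3,
   linear maps are matrices acting on the right (X |-> X *m D). *)
From HB Require Import structures.
From mathcomp Require Import all_boot all_order all_algebra.
From mathcomp Require Import reals.
Set Implicit Arguments. Unset Strict Implicit. Unset Printing Implicit Defensive.
Import Order.TTheory GRing.Theory Num.Theory.
Local Open Scope ring_scope.

Section G1.
Variables (R : realType) (alpha beta : R).

Definition e (k : nat) : 'rV[R]_3 := \row_(j < 3) ((j : nat) == k)%:R.

Definition brb (i j : nat) : 'rV[R]_3 :=
  match i, j with
  | 0, 1 => alpha *: e 0 - beta *: e 2
  | 1, 0 => - (alpha *: e 0 - beta *: e 2)
  | 0, 2 => - alpha *: e 0 - beta *: e 1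
  | 2, 0 => - (- alpha *: e 0 - beta *: e 1)
  | 1, 2 => beta *: e 0 + alpha *: e 1 + alpha *: e 2
  | 2, 1 => - (beta *: e 0 + alpha *: e 1 + alpha *: e 2)
  | _, _ => 0
  end.

Definition br (X Y : 'rV[R]_3) : 'rV[R]_3 :=
  \sum_(i < 3) \sum_(j < 3) (X 0 i * Y 0 j) *: brb i j.

Definition eps (k : 'I_3) : R := if (k : nat) == 2%N then -1 else 1.

Definition g (X Y : 'rV[R]_3) : R := \sum_(k < 3) eps k * X 0 k * Y 0 k.

(* Levi-Civita connection on left-invariant fields (Koszul formula):
   2 g(nabla_X Y, Z) = g([X,Y],Z) - g([Y,Z],X) + g([Z,X],Y) *)
Definition nabla (X Y : 'rV[R]_3) : 'rV[R]_3 :=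
  \sum_(k < 3) (eps k / 2 * (g (br X Y) (e k) - g (br Y (e k)) X
                              + g (br (e k) X) Y)) *: e k.

Definition curv (X Y Z : 'rV[R]_3) : 'rV[R]_3 :=
  nabla X (nabla Y Z) - nabla Y (nabla X Z) - nabla (br X Y) Z.

Definition rho (X Y : 'rV[R]_3) : R :=
  \sum_(k < 3) - eps k * g (curv X (e k) Y) (e k).

(* Ricci operator: the unique Ric with rho(X,Y) = g(Ric X, Y) *)
Definition Ric (X : 'rV[R]_3) : 'rV[R]_3 :=
  \sum_(k < 3) (eps k * rho X (e k)) *: e k.

Definition scal : R := \sum_(k < 3) eps k * rho (e k) (e k).

Definition is_derivation (D : 'M[R]_3) : Prop :=
  forall X Y : 'rV[R]_3, br X Y *m D = br (X *m D) Y + br X (Y *m D).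

Definition alg_schouten_soliton (lambda0 c : R) : Prop :=
  exists D : 'M[R]_3, is_derivation D /\
    forall X : 'rV[R]_3, Ric X = (scal * lambda0 + c) *: X + X *m D.

End G1.

(* Main.v *)
Require Import Defs.
From HB Require Import structures.
From mathcomp Require Import all_boot all_order all_algebra.
From mathcomp Require Import reals ring lra.
Import Order.TTheory GRing.Theory Num.Theory.
Local Open Scope ring_scope.
Section S.
Variables (R : realType) (a b : R).
Definition i0 : 'I_3 := @Ordinal 3 0 isT.
Definition i1 : 'I_3 := @Ordinal 3 1 isT.
Definition i2 : 'I_3 := @Ordinal 3 2 isT.
Lemma sum3 (V : zmodType) (F : 'I_3 -> V) : \sum_(i < 3) F i = F i0 + F i1 + F i2.
Proof. rewrite !big_ord_recr big_ord0 /= add0r; congr (F _ + F _ + F _); exact: val_inj. Qed.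
Lemma ord3 (j : 'I_3) : j = i0 \/ j = i1 \/ j = i2.
Proof. case: j => [[|[|[|n]]] H]; [left|right;left|right;right|by []]; exact: val_inj. Qed.
Lemma gE (X Y : 'rV[R]_3) : g X Y = X 0 i0 * Y 0 i0 + X 0 i1 * Y 0 i1 - X 0 i2 * Y 0 i2.
Proof. rewrite /g sum3 /eps /=. ring. Qed.
Local Notation x0 X := (X 0 i0).
Local Notation x1 X := (X 0 i1).
Local Notation x2 X := (X 0 i2).
Lemma brE0 (X Y : 'rV[R]_3) : br a b X Y 0 i0 = a * (x0 X * x1 Y - x1 X * x0 Y) - a * (x0 X * x2 Y - x2 X * x0 Y) + b * (x1 X * x2 Y - x2 X * x1 Y).
Proof. rewrite /br !sum3 /brb /= !mxE /=. ring. Qed.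
Lemma brE1 (X Y : 'rV[R]_3) : br a b X Y 0 i1 = - b * (x0 X * x2 Y - x2 X * x0 Y) + a * (x1 X * x2 Y - x2 X * x1 Y).
Proof. rewrite /br !sum3 /brb /= !mxE /=. ring. Qed.
Lemma brE2 (X Y : 'rV[R]_3) : br a b X Y 0 i2 = - b * (x0 X * x1 Y - x1 X * x0 Y) + a * (x1 X * x2 Y - x2 X * x1 Y).
Proof. rewrite /br !sum3 /brb /= !mxE /=. ring. Qed.
Lemma eE00 : e R 0 0 i0 = 1. Proof. by rewrite mxE. Qed.
Lemma eE01 : e R 0 0 i1 = 0. Proof. by rewrite mxE. Qed.
Lemma eE02 : e R 0 0 i2 = 0. Proof. by rewrite mxE. Qed.
Lemma eE10 : e R 1 0 i0 = 0. Proof. by rewrite mxE. Qed.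
Lemma eE11 : e R 1 0 i1 = 1. Proof. by rewrite mxE. Qed.
Lemma eE12 : e R 1 0 i2 = 0. Proof. by rewrite mxE. Qed.
Lemma eE20 : e R 2 0 i0 = 0. Proof. by rewrite mxE. Qed.
Lemma eE21 : e R 2 0 i1 = 0. Proof. by rewrite mxE. Qed.
Lemma eE22 : e R 2 0 i2 = 1. Proof. by rewrite mxE. Qed.
Lemma eps0 : eps R i0 = 1. Proof. by []. Qed.
Lemma eps1 : eps R i1 = 1. Proof. by []. Qed.
Lemma eps2 : eps R i2 = -1. Proof. by []. Qed.
Lemma nablaE (X Y : 'rV[R]_3) k : nabla a b X Y 0 k = eps R k / 2 * (g (br a b X Y) (e R k) - g (br a b Y (e R k)) X + g (br a b (e R k) X) Y).
Proof.
rewrite /nabla sum3 !mxE; case: (ord3 k) => [->|[->|->]]; rewrite ?mxE /=; ring.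
Qed.
Lemma curvE (X Y Z : 'rV[R]_3) k : curv a b X Y Z 0 k = nabla a b X (nabla a b Y Z) 0 k - nabla a b Y (nabla a b X Z) 0 k - nabla a b (br a b X Y) Z 0 k.
Proof. by rewrite /curv !mxE. Qed.
Definition EE := (eE00, eE01, eE02, eE10, eE11, eE12, eE20, eE21, eE22, eps0, eps1, eps2).
Lemma nE0 (X Y : 'rV[R]_3) : nabla a b X Y 0 i0 = a*x0 X*x1 Y - a*x0 X*x2 Y + b/2*(x1 X*x2 Y - x2 X*x1 Y).
Proof. rewrite nablaE !gE !(brE0, brE1, brE2) !EE. field; by rewrite ?pnatr_eq0. Qed.
Lemma nE1 (X Y : 'rV[R]_3) : nabla a b X Y 0 i1 = -a*x0 X*x0 Y - b/2*x0 X*x2 Y + a*x1 X*x2 Y + b/2*x2 X*x0 Y - a*x2 X*x2 Y.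
Proof. rewrite nablaE !gE !(brE0, brE1, brE2) !EE. field; by rewrite ?pnatr_eq0. Qed.
Lemma nE2 (X Y : 'rV[R]_3) : nabla a b X Y 0 i2 = -a*x0 X*x0 Y - b/2*x0 X*x1 Y + b/2*x1 X*x0 Y + a*x1 X*x1 Y - a*x2 X*x1 Y.
Proof. rewrite nablaE !gE !(brE0, brE1, brE2) !EE. field; by rewrite ?pnatr_eq0. Qed.
Opaque nabla br e curv.
Lemma rhoE (X Y : 'rV[R]_3) : rho a b X Y = - curv a b X (e R i0) Y 0 i0 - curv a b X (e R i1) Y 0 i1 - curv a b X (e R i2) Y 0 i2.
Proof. rewrite /rho sum3 !gE !EE.
move: (curv a b X (e R i0) Y) (curv a b X (e R i1) Y) (curv a b X (e R i2) Y) => C0 C1 C2; ring. Qed.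
Definition NE := (nE0, nE1, nE2, brE0, brE1, brE2).
Ltac ricsolve :=
  rewrite /Ric sum3 !mxE /= ?mulr1n ?mulr0n ?mulr0 ?addr0 ?add0r ?mulr1;
  rewrite !EE !rhoE !curvE; rewrite !NE; rewrite !EE; field; by rewrite ?pnatr_eq0.
Lemma RicE0 (X : 'rV[R]_3) : Ric a b X 0 i0 = - (b^+2/2) * x0 X - a * b * x1 X + a * b * x2 X.
Proof. ricsolve. Qed.
Lemma RicE1 (X : 'rV[R]_3) : Ric a b X 0 i1 = - a * b * x0 X - (b^+2/2 + 2 * a^+2) * x1 X + 2 * a^+2 * x2 X.
Proof. ricsolve. Qed.
Lemma RicE2 (X : 'rV[R]_3) : Ric a b X 0 i2 = - a * b * x0 X - 2 * a^+2 * x1 X + (2 * a^+2 - b^+2/2) * x2 X.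
Proof. ricsolve. Qed.
Lemma rhoRic (X : 'rV[R]_3) k : Ric a b X 0 k = eps R k * rho a b X (e R k).
Proof. rewrite /Ric sum3 !mxE; case: (ord3 k) => [->|[->|->]] /=; rewrite ?mulr1n ?mulr0n; ring. Qed.
Lemma scalE : scal a b = - (3/2) * b^+2.
Proof.
have r0 : eps R i0 * rho a b (e R i0) (e R i0) = - (b^+2/2) by rewrite -rhoRic RicE0 !EE; ring.
have r1 : eps R i1 * rho a b (e R i1) (e R i1) = - (b^+2/2 + 2 * a^+2) by rewrite -rhoRic RicE1 !EE; ring.
have r2 : eps R i2 * rho a b (e R i2) (e R i2) = 2 * a^+2 - b^+2/2 by rewrite -rhoRic RicE2 !EE; ring.
rewrite /scal sum3 r0 r1 r2; field; by rewrite ?pnatr_eq0.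
Qed.
Lemma mulE (X : 'rV[R]_3) (D : 'M[R]_3) k : (X *m D) 0 k = x0 X * D i0 k + x1 X * D i1 k + x2 X * D i2 k.
Proof. by rewrite mxE sum3. Qed.
Lemma sclE (X : 'rV[R]_3) (t : R) k : (t *: X) 0 k = t * X 0 k.
Proof. by rewrite mxE. Qed.
Lemma addE (X Y : 'rV[R]_3) k : (X + Y) 0 k = X 0 k + Y 0 k.
Proof. by rewrite mxE. Qed.
Opaque Ric scal.
Lemma main (ha : a != 0) (l0 c : R) : alg_schouten_soliton a b l0 c <-> b = 0 /\ c = 0.
Proof.
split.
- case=> D [der HR].
  have HD X k : Ric a b X 0 k = (scal a b * l0 + c) * X 0 k + (X *m D) 0 k.
    by rewrite HR addE sclE.
  rewrite scalE in HD.
  set t := - (3/2) * b^+2 * l0 + c in HD.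
  pose Mx := \matrix_(i < 3, j < 3) [:: - (b^+2/2) - t; - a * b; - a * b;
      - a * b; - (b^+2/2 + 2 * a^+2) - t; - 2 * a^+2;
      a * b; 2 * a^+2; 2 * a^+2 - b^+2/2 - t]`_(3 * i + j).
  have HDij i j : D i j = Mx i j.
    rewrite mxE; have := HD (e R i) j; rewrite mulE.
    case: (ord3 j) => [->|[->|->]]; [rewrite RicE0 | rewrite RicE1 | rewrite RicE2];
    case: (ord3 i) => [->|[->|->]]; rewrite !EE /= => h; lra.
  have E0 : (br a b (e R 0) (e R 1) *m D) 0 i0 = (br a b (e R 0 *m D) (e R 1) + br a b (e R 0) (e R 1 *m D)) 0 i0 by rewrite der.
  have E1 : (br a b (e R 0) (e R 1) *m D) 0 i1 = (br a b (e R 0 *m D) (e R 1) + br a b (e R 0) (e R 1 *m D)) 0 i1 by rewrite der.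
  rewrite addE mulE !(brE0, brE1, brE2) !mulE !EE !HDij !mxE /= in E0.
  rewrite addE mulE !(brE0, brE1, brE2) !mulE !EE !HDij !mxE /= in E1.
  move/eqP: E0; rewrite -subr_eq0 => /eqP E0.
  move/eqP: E1; rewrite -subr_eq0 => /eqP E1.
  have h : a^+2 * b * (-6) = 0.
    rewrite -E1; field; by rewrite ?pnatr_eq0.
  have hb : b = 0.
    have -> : b = a^+2 * b * (-6) / (a^+2 * (-6)) by field; rewrite ?oppr_eq0 ?pnatr_eq0 ?andbT //.
    by rewrite h mul0r.
  rewrite hb in E0.
  have h2 : t * a = 0.
    rewrite -E0; field; by rewrite ?pnatr_eq0.
  have ht : t = 0.
    have -> : t = t * a / a by field.
    by rewrite h2 mul0r.
  split => //.
  have : c = t by rewrite /t hb; ring.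
  by rewrite ht.
- case=> hb hc.
  exists (\matrix_(i < 3, j < 3) [:: 0; 0; 0; 0; - 2 * a^+2; - 2 * a^+2; 0; 2 * a^+2; 2 * a^+2]`_(3 * i + j)).
  split.
  + move=> X Y; apply/rowP => k; rewrite addE.
    case: (ord3 k) => [->|[->|->]]; rewrite mulE !(brE0, brE1, brE2) !mulE !mxE /= ?hb; ring.
  + move=> X; apply/rowP => k; rewrite addE sclE mulE scalE.
    case: (ord3 k) => [->|[->|->]]; [rewrite RicE0 | rewrite RicE1 | rewrite RicE2];
    rewrite !mxE /= ?hb hc; field; by rewrite ?pnatr_eq0.
Qed.
End S.

Theorem theorem3p2 (R : realType) (alpha beta lambda0 c : R) :
  alpha != 0 ->
  (alg_schouten_soliton alpha beta lambda0 c <-> (beta = 0 /\ c = 0)).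
Proof. move=> ha; exact: (@main R alpha beta ha lambda0 c). Qed.
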